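(* Let $n$ be even, let $V$ be an $n$-dimensional $\mathbb{F}_2$-vector space, and let $h:V\to\mathbb{F}_2$ be a Maiorana–McFarland bent function which has a unique $\mathcal{M}$-subspace $\mathcal{W}$ of dimension $n/2$ such that every nontrivial $\mathcal{M}$-subspace $\mathcal{U}$ of $h$ satisfies $\mathcal{U}\subseteq\mathcal{W}$. Let $\widetilde{\mathcal{W}}$ be a subspace with $\mathcal{W}\cap\widetilde{\mathcal{W}}=\{0\}$ and $\mathcal{W}+\widetilde{\mathcal{W}}=V$, and let $L$ be a linear permutation of $V$ with $L(\widetilde{\mathcal{W}})=\mathcal{W}$. Let $k$ be a positive integer, $V_0=\{z\in\mathbb{F}_{2^k}:{\rm Tr}_1^k(z)=0\}$, and for $z\in\mathbb{F}_{2^k}$ put $f^{(z)}=h$ if $z\in V_0$ and $f^{(z)}=h\circ L$ if $z\notin V_0$. If $n>2k+4$, then the function $f:V\times\mathbb{F}_{2^k}\times\mathbb{F}_{2^k}\to\mathbb{F}_2$, $f(x,y,z)=f^{(z)}(x)+{\rm Tr}_1^k(yz)$, is not (EA-equivalent to) a Maiorana–McFarland function, i.e. $f\notin MM^{\#}$; equivalently, every $\mathcal{M}$-subspace $\mathcal{U}$ of $f$ satisfies $\dim\mathcal{U}<n/2+k$.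
   Context: ${\rm Tr}_1^k$ is the absolute trace of $\mathbb{F}_{2^k}$. For a Boolean function $g$ on an $\mathbb{F}_2$-space $X$, $D_aD_bg(x)=g(x)+g(x+a)+g(x+b)+g(x+a+b)$. A subspace $\mathcal{U}\subseteq X$ is an $\mathcal{M}$-subspace of $g$ if $D_aD_bg(x)=0$ for all $a,b\in\mathcal{U}$ and all $x\in X$; it is nontrivial if its dimension is at least $2$. A Boolean function $g$ on $X$ is bent if all its Walsh values $\sum_x(-1)^{g(x)+\langle b,x\rangle}$ have absolute value $2^{\dim X/2}$. Two Boolean functions $f,g$ on $X$ are EA-equivalent if $g(x)=f(L'(x)+a)+\langle c,x\rangle+b$ with $L'$ a linear permutation of $X$, $a,c\in X$, $b\in\mathbb{F}_2$. The Maiorana–McFarland class on $\mathbb{F}_{2^N}\times\mathbb{F}_{2^N}$ consists of functions ${\rm Tr}_1^N(x\pi(y))+g(y)$ with $\pi$ a permutation of $\mathbb{F}_{2^N}$; $MM^{\#}$ is the set of Boolean functions on a $2N$-dimensional $\mathbb{F}_2$-space EA-equivalent (after a linear identification of the space with $\mathbb{F}_{2^N}^2$) to such a function. A bent function on a $2N$-dimensional space is a Maiorana–McFarland bent function (lies in $MM^{\#}$) iff it has an $\mathcal{M}$-subspace of dimension $N$. *)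

(* Defs.v *)
From HB Require Import structures.
From mathcomp Require Import all_boot all_order all_algebra all_field.
Set Implicit Arguments. Unset Strict Implicit. Unset Printing Implicit Defensive.
Import GRing.Theory Num.Theory.
Local Open Scope ring_scope.

Definition D2 (X : zmodType) (g : X -> 'F_2) (a b x : X) : 'F_2 :=
  g x + g (x + a) + g (x + b) + g (x + a + b).

Definition Msubspace (X : vectType 'F_2) (g : X -> 'F_2) (U : {vspace X}) : Prop :=
  forall a b, a \in U -> b \in U -> forall x, D2 g a b x = 0.

Definition dotF2 (n : nat) (b x : 'rV['F_2]_n) : 'F_2 := (x *m b^T) 0 0.

Definition sgnF2 (e : 'F_2) : int := if e == 0 then 1 else -1.

Definition walsh (n : nat) (g : 'rV['F_2]_n -> 'F_2) (b : 'rV['F_2]_n) : int :=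
  \sum_(x : 'rV['F_2]_n) sgnF2 (g x + dotF2 b x).

Definition bent (n : nat) (g : 'rV['F_2]_n -> 'F_2) : Prop :=
  forall b, `|walsh g b| = (2 ^ n./2)%:Z.

Definition absTr (K : fieldExtType 'F_2) (z : K) : K :=
  \sum_(i < \dim {:K}) z ^+ (2 ^ i).

(* The trace viewed as an F_2-valued (Boolean) function: Tr takes values in {0,1}. *)
Definition absTrF2 (K : fieldExtType 'F_2) (z : K) : 'F_2 :=
  if absTr z == 0 then 0 else 1.

Definition fconstr (n : nat) (K : fieldExtType 'F_2)
  (h : 'rV['F_2]_n -> 'F_2) (L : 'rV['F_2]_n -> 'rV['F_2]_n)
  (p : 'rV['F_2]_n * K * K) : 'F_2 :=
  let: (x, y, z) := p in
  (if absTr z == 0 then h x else h (L x)) + absTrF2 (y * z).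

(* Main.v *)
Require Import Defs.
From HB Require Import structures.
From mathcomp Require Import all_boot all_order all_algebra all_field zify.
Import GRing.Theory Num.Theory.
Local Open Scope ring_scope.
Import VectorInternalTheory.

Lemma trace_ex (K : fieldExtType 'F_2) : (0 < \dim {:K})%N -> exists z : K, absTr z != 0.
Proof.
move=> k0.
set k := \dim {:K}.
have [k' Hk] : exists k', k = k'.+1 by exists k.-1; rewrite prednK.
pose p : {poly K} := \sum_(i < k) 'X^(2 ^ i).
pose rs := map (@r2v _ K) (enum 'rV['F_2]_(dim K)).
have Hp z : p.[z] = absTr z.
  by rewrite /p horner_sum /absTr; apply: eq_bigr => i _; rewrite hornerXn.
case: (boolP (all (fun z => absTr z == 0) rs)) => [Hall | ]; last first.
  by case/allPn => z _ Hz; exists z.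
exfalso.
have pn0 : p != 0.
  apply/eqP => /(congr1 (fun q : {poly K} => q`_1)).
  rewrite /p coef_sum coef0.
  rewrite Hk big_ord_recl /= coefXn /= big1 ?addr0 ?(@oner_eq0 K) //.
    by move/eqP; rewrite oner_eq0.
  move=> i _; rewrite coefXn.
  have : (1 == 2 ^ (bump 0 i))%N = false.
    apply/negbTE; rewrite /bump /= add1n expnS.
    have := expn_gt0 2 i; lia.
  by move=> ->.
have := @max_poly_roots _ p rs pn0.
have -> : all (root p) rs.
  by apply/allP => z zr; rewrite /root Hp; apply: (allP Hall).
rewrite map_inj_uniq ?enum_uniq; last exact: r2v_inj.
move=> /(_ isT isT).
rewrite size_map -cardE card_mx card_Fp // mul1n -dimvf -/k.
have : (size p <= (2 ^ k.-1).+1)%N.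
  apply: leq_trans (size_sum _ _ _) _.
  apply/bigmax_leqP => i _; rewrite size_polyXn ltnS leq_exp2l //.
  by have := ltn_ord i; lia.
rewrite Hk /= expnS.
have : (0 < 2 ^ k')%N by rewrite expn_gt0.
move=> h1 h2 h3; move: h1 h2 h3; set t := (2 ^ k')%N; set s := size p.
clearbody t s. clear -t s. lia.
Qed.

Section Proj.
Variables (n : nat) (K : fieldExtType 'F_2).
Definition pr1 (v : 'rV['F_2]_n * K * K) : 'rV['F_2]_n := v.1.1.
Definition pr23 (v : 'rV['F_2]_n * K * K) : K * K := (v.1.2, v.2).
Fact pr1_lin : linear pr1. Proof. by move=> a u v. Qed.
Fact pr23_lin : linear pr23. Proof. by move=> a u v. Qed.
HB.instance Definition _ := GRing.isLinear.Build 'F_2 _ _ _ pr1 pr1_lin.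
HB.instance Definition _ := GRing.isLinear.Build 'F_2 _ _ _ pr23 pr23_lin.
End Proj.

Lemma absTr0 (K : fieldExtType 'F_2) : absTr (0 : K) = 0.
Proof. by rewrite /absTr big1 // => i _; rewrite expr0n expn_eq0. Qed.

Lemma absTrF20 (K : fieldExtType 'F_2) : absTrF2 (0 : K) = 0.
Proof. by rewrite /absTrF2 absTr0 eqxx. Qed.

Lemma fconstr_D2 n (K : fieldExtType 'F_2) h (L : 'rV['F_2]_n -> 'rV['F_2]_n)
  a1 b1 x (z : K) :
  D2 (fconstr h L) (a1,0,0) (b1,0,0) (x,0,z) =
  D2 (fun x => if absTr z == 0 then h x else h (L x)) a1 b1 x.
Proof.
rewrite /D2 /fconstr /=.
by rewrite !addr0 !mul0r !absTrF20 !addr0.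
Qed.

Theorem proposition3p4
  (n k : nat) (K : fieldExtType 'F_2)
  (h : 'rV['F_2]_n -> 'F_2)
  (W Wt : {vspace 'rV['F_2]_n})
  (L : 'End('rV['F_2]_n)) :
  ~~ odd n ->
  (* h is a Maiorana-McFarland bent function with M-subspace W of dimension n/2 *)
  bent h ->
  Msubspace h W -> \dim W = n./2 ->
  (* W is the unique M-subspace of dimension n/2 *)
  (forall U : {vspace 'rV['F_2]_n}, Msubspace h U -> \dim U = n./2 -> U = W) ->
  (* every nontrivial M-subspace of h is contained in W *)
  (forall U : {vspace 'rV['F_2]_n}, Msubspace h U -> (2 <= \dim U)%N -> (U <= W)%VS) ->
  (* Wt is a complement of W *)
  (W :&: Wt)%VS = 0%VS -> (W + Wt)%VS = fullv ->
  (* L is a linear permutation with L(Wt) = W *)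
  bijective L -> (L @: Wt)%VS = W ->
  (* K = F_{2^k}, k > 0 *)
  (0 < k)%N -> \dim {:K} = k ->
  (2 * k + 4 < n)%N ->
  forall U : {vspace ('rV['F_2]_n * K * K)},
    Msubspace (fconstr h L) U -> (\dim U < n./2 + k)%N.
Proof.
move=> evn _ _ _ _ Hsub capW _ bijL LWt k0 dK hn U MU.
rewrite ltnNge; apply/negP => HU.
set f23 := linfun (@pr23 n K).
set f1 := linfun (@pr1 n K).
set U1 := (U :&: lker f23)%VS.
have d1 : (\dim U <= \dim U1 + 2 * k)%N.
  rewrite -(limg_ker_dim f23 U) leq_add2l.
  apply: leq_trans (dimvS (subvf _)) _.
  rewrite dimvf -dK dimvf mul2n -addnn; exact: leqnn.
set U2 := (f1 @: U1)%VS.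
have d2 : \dim U2 = \dim U1.
  apply: limg_dim_eq; apply/eqP; rewrite -subv0; apply/subvP => v.
  rewrite !memv_cap !memv_ker !lfunE memv0 => /andP[/andP[_ h23] h1].
  move: h23 h1.
  case: v => [[x y] z]; rewrite /pr23 /= => /eqP [-> ->]; rewrite /pr1 /= => /eqP ->.
  by [].
have HU1 a : a \in U1 -> a = (f1 a, 0, 0).
  rewrite memv_cap memv_ker lfunE => /andP[_].
  case: a => [[x y] z]; rewrite /pr23 /= => /eqP [-> ->].
  by rewrite lfunE.
have key a b x (z : K) : a \in U2 -> b \in U2 ->
    D2 (fun x => if absTr z == 0 then h x else h (L x)) a b x = 0.
  move=> /memv_imgP[a' a'U ->] /memv_imgP[b' b'U ->].
  rewrite -fconstr_D2.
  have Ha : a' \in U by move: a'U; rewrite memv_cap => /andP[].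
  have Hb : b' \in U by move: b'U; rewrite memv_cap => /andP[].
  have := MU a' b' Ha Hb (x,0,z).
  by rewrite {1}(HU1 _ a'U) {1}(HU1 _ b'U).
have [z0 z0n] := @trace_ex K ltac:(by rewrite dK).
have MU2 : Msubspace h U2.
  move=> a b aU bU x; have := key a b x 0 aU bU.
  by rewrite absTr0 eqxx.
have injL : injective L by apply: bij_inj.
have kL : lker L = 0%VS by apply/eqP/lker0P.
have MLU2 : Msubspace h (L @: U2)%VS.
  move=> a b /memv_imgP[a1 a1U ->] /memv_imgP[b1 b1U ->] x.
  case: bijL => g gK Kg.
  have := key a1 b1 (g x) z0 a1U b1U.
  rewrite (negbTE z0n) /D2 !linearD /= Kg.
  by [].
have dn : (2 <= \dim U2)%N.
  move: (odd_double_half n); rewrite (negbTE evn) add0n -muln2 => En.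
  rewrite d2; clear -En d1 HU hn; lia.
have s1 : (U2 <= W)%VS by apply: Hsub.
have s2 : (L @: U2 <= W)%VS.
  apply: Hsub => //; rewrite limg_dim_eq // kL capv0 //.
have s3 : (U2 <= Wt)%VS.
  apply/subvP => u uU; have := subvP s2 _ (memv_img L uU).
  rewrite -LWt => /memv_imgP[w wW /injL ->] //.
have : (U2 <= W :&: Wt)%VS by rewrite subv_cap s1 s3.
rewrite capW subv0 -dimv_eq0 => /eqP d0.
by rewrite d0 in dn.
Qed.
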